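(* The $\mathbb F$-algebra homomorphism $\phi:\mathcal O\to\Delta$ that sends $X\mapsto A$ and $Y\mapsto B$ is not injective.
   Context: Let $\mathbb F$ be a field and fix a nonzero $q\in\mathbb F$ with $q^4\neq 1$; $[3]_q=q^2+1+q^{-2}$. The universal Askey--Wilson algebra $\Delta$ is the associative $\mathbb F$-algebra with 1 with generators $A,B,C$ subject to the relations that each of $A+\frac{qBC-q^{-1}CB}{q^2-q^{-2}}$, $B+\frac{qCA-q^{-1}AC}{q^2-q^{-2}}$, $C+\frac{qAB-q^{-1}BA}{q^2-q^{-2}}$ is central. The $q$-Onsager algebra $\mathcal O$ is the $\mathbb F$-algebra with generators $X,Y$ and relations $X^3Y-[3]_q X^2YX+[3]_q XYX^2-YX^3 = -(q^2-q^{-2})^2(XY-YX)$ and $Y^3X-[3]_q Y^2XY+[3]_q YXY^2-XY^3 = -(q^2-q^{-2})^2(YX-XY)$. (The homomorphism $\phi$ exists since $A,B$ satisfy these relations in $\Delta$.) *)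

(* Defs.v *)
From HB Require Import structures.
From mathcomp Require Import all_boot all_order all_algebra.
Set Implicit Arguments. Unset Strict Implicit. Unset Printing Implicit Defensive.
Import GRing.Theory.
Local Open Scope ring_scope.

(* Noncommutative polynomial expressions over F in two variables X, Y
   (syntactic representatives of elements of the free algebra F<X,Y>). *)
Inductive ncpoly2 (F : Type) : Type :=
| NCX : ncpoly2 F
| NCY : ncpoly2 F
| NCconst : F -> ncpoly2 F
| NCadd : ncpoly2 F -> ncpoly2 F -> ncpoly2 F
| NCopp : ncpoly2 F -> ncpoly2 F
| NCmul : ncpoly2 F -> ncpoly2 F -> ncpoly2 F.

Fixpoint nceval (F : fieldType) (R : algType F) (x y : R) (p : ncpoly2 F) : R :=
  match p with
  | NCX => x
  | NCY => y
  | NCconst c => c%:A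
  | NCadd p1 p2 => nceval x y p1 + nceval x y p2
  | NCopp p1 => - nceval x y p1
  | NCmul p1 p2 => nceval x y p1 * nceval x y p2
  end.

Definition qint3 (F : fieldType) (q : F) : F := q ^+ 2 + 1 + q ^- 2.

Definition qOnsager_rel (F : fieldType) (q : F) (R : algType F) (x y : R) : Prop :=
  x ^+ 3 * y - qint3 q *: (x ^+ 2 * y * x) + qint3 q *: (x * y * x ^+ 2) - y * x ^+ 3
    = - ((q ^+ 2 - q ^- 2) ^+ 2) *: (x * y - y * x) /\
  y ^+ 3 * x - qint3 q *: (y ^+ 2 * x * y) + qint3 q *: (y * x * y ^+ 2) - x * y ^+ 3
    = - ((q ^+ 2 - q ^- 2) ^+ 2) *: (y * x - x * y).

Definition central3 (F : fieldType) (R : algType F) (a b c z : R) : Prop :=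
  z * a = a * z /\ z * b = b * z /\ z * c = c * z.

Definition UAW_rel (F : fieldType) (q : F) (R : algType F) (a b c : R) : Prop :=
  let d := (q ^+ 2 - q ^- 2)^-1 in
  central3 a b c (a + d *: (q *: (b * c) - q^-1 *: (c * b))) /\
  central3 a b c (b + d *: (q *: (c * a) - q^-1 *: (a * c))) /\
  central3 a b c (c + d *: (q *: (a * b) - q^-1 *: (b * a))).

(* An element p of F<X,Y> maps to 0 in Delta under X |-> A, Y |-> B
   (universal property of the presentation of Delta). *)
Definition zero_in_UAW (F : fieldType) (q : F) (p : ncpoly2 F) : Prop :=
  forall (R : algType F) (a b c : R), UAW_rel q a b c -> nceval a b p = 0.

(* An element p of F<X,Y> is nonzero in O (universal property of the
   presentation of O). *)
Definition nonzero_in_qOnsager (F : fieldType) (q : F) (p : ncpoly2 F) : Prop :=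
  exists (R : algType F) (x y : R), qOnsager_rel q x y /\ nceval x y p <> 0.

Definition phi_not_injective (F : fieldType) (q : F) : Prop :=
  exists p : ncpoly2 F, nonzero_in_qOnsager q p /\ zero_in_UAW q p.

(* Main.v *)
Require Import Defs.
From HB Require Import structures.
From mathcomp Require Import all_boot all_order all_algebra.
From mathcomp Require Import ring.
Set Implicit Arguments. Unset Strict Implicit. Unset Printing Implicit Defensive.
Import GRing.Theory.
Local Open Scope ring_scope.

Section Lin.
Variable F : fieldType.
Variable V : lmodType F.
Variables W1 W2 W3 : V.
Definition lc (v : 'rV[F]_3) : V := v 0 0 *: W1 + v 0 1 *: W2 + v 0 2%:R *: W3.
Definition ev (k1 k2 k3 : F) : 'rV[F]_3 := \row_(i < 3) nth 0 [:: k1; k2; k3] i.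
Lemma lcD u v : lc (u + v) = lc u + lc v.
Proof. by rewrite /lc !mxE !scalerDl (addrACA (u 0 0 *: W1 + u 0 1 *: W2)) (addrACA (u 0 0 *: W1)). Qed.
Lemma lcN v : lc (- v) = - lc v.
Proof. by rewrite /lc !mxE !scaleNr !opprD. Qed.
Lemma lcZ k v : lc (k *: v) = k *: lc v.
Proof. by rewrite /lc !mxE !scalerDr !scalerA. Qed.
Lemma lc1 : W1 = lc (ev 1 0 0). Proof. by rewrite /lc !mxE /= scale1r !scale0r !addr0. Qed.
Lemma lc2 : W2 = lc (ev 0 1 0). Proof. by rewrite /lc !mxE /= scale1r !scale0r add0r addr0. Qed.
Lemma lc3 : W3 = lc (ev 0 0 1). Proof. by rewrite /lc !mxE /= scale1r !scale0r !add0r. Qed.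
Lemma evD a b c a' b' c' : ev a b c + ev a' b' c' = ev (a + a') (b + b') (c + c').
Proof. by apply/rowP => i; rewrite !mxE; case: i => [[|[|[|//]]] Hi]. Qed.
Lemma evN a b c : - ev a b c = ev (- a) (- b) (- c).
Proof. by apply/rowP => i; rewrite !mxE; case: i => [[|[|[|//]]] Hi]. Qed.
Lemma evZ k a b c : k *: ev a b c = ev (k * a) (k * b) (k * c).
Proof. by apply/rowP => i; rewrite !mxE; case: i => [[|[|[|//]]] Hi]. Qed.
End Lin.

Ltac linsolve W1 W2 W3 :=
  let E1 := fresh in let E2 := fresh in let E3 := fresh in let L := fresh "L" in
  have E1 := lc1 W1 W2 W3; have E2 := lc2 W1 W2 W3; have E3 := lc3 W1 W2 W3;
  set L := lc W1 W2 W3 in E1 E2 E3 *;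
  rewrite {}E1 {}E2 {}E3;
  do ? (rewrite -[L _ + L _]lcD || rewrite -[- L _]lcN || rewrite -[_ *: L _]lcZ);
  do ? (rewrite evD || rewrite evN || rewrite evZ);
  congr (L _); congr ev.


Section Mx.
Variable F : fieldType.

Definition cv (v0 v1 v2 v3 : F) : 'cV[F]_4 := \col_(i < 4) nth 0 [:: v0; v1; v2; v3] i.

Lemma cvD a b c d a' b' c' d' : cv a b c d + cv a' b' c' d' = cv (a + a') (b + b') (c + c') (d + d').
Proof. by apply/colP => i; rewrite !mxE; case: i => [[|[|[|[|//]]]] Hi]. Qed.
Lemma cvN a b c d : - cv a b c d = cv (- a) (- b) (- c) (- d).
Proof. by apply/colP => i; rewrite !mxE; case: i => [[|[|[|[|//]]]] Hi]. Qed.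
Lemma cvZ k a b c d : k *: cv a b c d = cv (k * a) (k * b) (k * c) (k * d).
Proof. by apply/colP => i; rewrite !mxE; case: i => [[|[|[|[|//]]]] Hi]. Qed.

Definition mx4 (f : nat -> nat -> F) : 'M[F]_4 := \matrix_(i < 4, j < 4) f i j.

Lemma mx4v f a b c d : mx4 f *m cv a b c d =
  cv (f 0%N 0%N * a + f 0%N 1%N * b + f 0%N 2%N * c + f 0%N 3%N * d)
     (f 1%N 0%N * a + f 1%N 1%N * b + f 1%N 2%N * c + f 1%N 3%N * d)
     (f 2%N 0%N * a + f 2%N 1%N * b + f 2%N 2%N * c + f 2%N 3%N * d)
     (f 3%N 0%N * a + f 3%N 1%N * b + f 3%N 2%N * c + f 3%N 3%N * d).
Proof.
apply/colP => i; rewrite !mxE !big_ord_recr big_ord0 /= !mxE /= add0r.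
by case: i => [[|[|[|[|//]]]] Hi].
Qed.

Lemma mx4_eq (A B : 'M[F]_4) :
  (forall a b c d, A *m cv a b c d = B *m cv a b c d) -> A = B.
Proof.
move=> H; apply/matrixP => i j.
have Hd : delta_mx j 0 = cv (j == 0 :> nat)%:R (j == 1 :> nat)%:R (j == 2 :> nat)%:R (j == 3 :> nat)%:R.
  apply/colP => k; rewrite !mxE.
  by case: j => [[|[|[|[|//]]]] Hj]; case: k => [[|[|[|[|//]]]] Hk].
have := congr1 (fun M : 'cV[F]_4 => M i 0) (H (j == 0 :> nat)%:R (j == 1 :> nat)%:R (j == 2 :> nat)%:R (j == 3 :> nat)%:R).
by rewrite -Hd -!colE !mxE.
Qed.
End Mx.

Section Rep.
Variable F : fieldType.
Variable q : F.
Hypothesis hq0 : q != 0.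

Definition T0 : F := 1 + 1.
Definition T1 : F := q ^+ 2 + q ^- 2.
Definition T2 : F := q ^+ 4 + q ^- 4.
Definition dd : F := q ^+ 2 - q ^- 2.
Definition L1 : F := (q - q^-1) ^+ 2 * (T0 + qint3 q * T2) - dd ^+ 2 * T1.

Definition xe (i j : nat) : F :=
  match i, j with
  | O, O => T0 | 1%N, O => 1 | 1%N, 1%N => T1 | 2%N, 2%N => T1
  | 3%N, 1%N => 1 | 3%N, 3%N => T2 | _, _ => 0 end.
Definition ye (i j : nat) : F :=
  match i, j with
  | O, O => T0 | O, 1%N => L1 | O, 2%N => 1 | 1%N, 1%N => T1 | 2%N, 2%N => T1
  | 2%N, 3%N => 1 | 3%N, 3%N => T2 | _, _ => 0 end.
Definition xm := mx4 xe.
Definition ym := mx4 ye.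

Lemma xmv a b c d : xm *m cv a b c d = cv (T0 * a) (a + T1 * b) (T1 * c) (b + T2 * d).
Proof. by rewrite /xm mx4v /=; congr cv; ring. Qed.
Lemma ymv a b c d : ym *m cv a b c d = cv (T0 * a + L1 * b + c) (T1 * b) (T1 * c + d) (T2 * d).
Proof. by rewrite /ym mx4v /=; congr cv; ring. Qed.

Lemma mulE (A B : 'M[F]_4) : A * B = A *m B. Proof. by []. Qed.
Lemma pw3 (A : 'M[F]_4) : A ^+ 3 = A * (A * A). Proof. by rewrite !exprS expr0 mulr1. Qed.
Lemma pw2 (A : 'M[F]_4) : A ^+ 2 = A * A. Proof. by rewrite !exprS expr0 mulr1. Qed.
Lemma algE (k : F) (A : 'M[F]_4) : k%:A * A = k *: A. Proof. by rewrite mulr_algl. Qed.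



End Rep.

Ltac push := rewrite ?pw3 ?pw2 ?algE; rewrite ?mulE;
  do ? (rewrite mulmxDl || rewrite mulNmx || rewrite -scalemxAl || rewrite -mulmxA
        || rewrite xmv || rewrite ymv || rewrite cvN || rewrite cvZ || rewrite cvD).


Lemma rel_ok (F : fieldType) (q : F) : q != 0 -> qOnsager_rel q (xm q) (ym q).
Proof.
move=> hq0.
split; apply: mx4_eq => a b c d; push; rewrite /L1 /T0 /T1 /T2 /dd /qint3; congr cv; field; done.
Qed.


Definition nsub (F : Type) (p1 p2 : ncpoly2 F) := NCadd p1 (NCopp p2).
Definition ncom (F : Type) (p1 p2 : ncpoly2 F) := nsub (NCmul p1 p2) (NCmul p2 p1).
Definition Uq (F : fieldType) (q : F) : ncpoly2 F :=
  NCadd (nsub (NCmul (NCY F) (NCmul (NCY F) (NCX F)))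
              (NCmul (NCconst (q ^+ 2 + q ^- 2)) (NCmul (NCY F) (NCmul (NCX F) (NCY F)))))
        (NCmul (NCX F) (NCmul (NCY F) (NCY F))).
Definition Pq (F : fieldType) (q : F) : ncpoly2 F :=
  nsub (NCmul (ncom (Uq q) (NCX F)) (NCmul (NCX F) (ncom (NCX F) (NCY F))))
       (NCmul (ncom (NCX F) (NCY F)) (NCmul (NCX F) (ncom (Uq q) (NCX F)))).

Lemma P_nonzero (F : fieldType) (q : F) : q != 0 -> nceval (xm q) (ym q) (Pq q) <> 0.
Proof.
move=> hq0 H.
have := congr1 (fun M : 'M[F]_4 => M *m cv 0 0 1 0) H.
rewrite mul0mx; cbn [nceval Pq Uq nsub ncom].
push => E.
have := congr1 (fun v : 'cV[F]_4 => v 3%:R 0) E.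
rewrite !mxE /=.
rewrite /L1 /T0 /T1 /T2 /dd /qint3.
move=> {}E. have : (-1 : F) = 0.
  rewrite -E. field; done.
by move/eqP; rewrite oppr_eq0 oner_eq0.
Qed.

Lemma commM (R : ringType) (g x y : R) : g * x = x * g -> g * y = y * g -> g * (x * y) = x * y * g.
Proof. by move=> hx hy; rewrite mulrA hx -mulrA hy mulrA. Qed.

Lemma delta_side (F : fieldType) (q : F) (R : algType F) (a b c : R) :
  q != 0 -> q ^+ 4 != 1 -> UAW_rel q a b c -> nceval a b (Pq q) = 0.
Proof.
move=> hq0 hq4.
rewrite /UAW_rel /central3 /=.
set d := q ^+ 2 - q ^- 2.
move=> [[Hal _] [_ [Hga [Hgb _]]]].
have hd : d != 0.
  apply: contra hq4 => /eqP hd0.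
  have h2 : q ^+ 2 = q ^- 2 by apply/eqP; rewrite -subr_eq0 -/d hd0.
  by rewrite (_ : 4 = 2 + 2)%N // exprD {1}h2 mulVf // expf_neq0.
have hq4' : (q * q) ^+ 2 - 1 != 0 by rewrite subr_eq0 -expr2 -exprM.
set e := d^-1 in Hal Hga Hgb.
set h := q *: (a * b) - q^-1 *: (b * a) in Hga Hgb.
set g := c + e *: h in Hga Hgb.
set X := q *: (b * c) - q^-1 *: (c * b) in Hal.
cbn [nceval Pq Uq nsub ncom]; rewrite !mulr_algl.
set u := b * (b * a) - (q ^+ 2 + q ^- 2) *: (b * (a * b)) + a * (b * b).
set m := a * b - b * a.
have gE : g = c + e *: h by [].
have XE : X = q *: (b * c) - q^-1 *: (c * b) by [].
have uE : u = b * (b * a) - (q ^+ 2 + q ^- 2) *: (b * (a * b)) + a * (b * b) by [].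
have mE : m = a * b - b * a by [].
have hE : h = q *: (a * b) - q^-1 *: (b * a) by [].
clearbody m u X g h.
have Hu : u = q^-1 *: (h * b) - q *: (b * h).
  rewrite uE hE mulrBl mulrBr -!scalerAl -!scalerAr -!mulrA.
  linsolve (b * (a * b)) (b * (b * a)) (a * (b * b)); field; rewrite ?hq0 ?hq4' //.
have K1 : b * c = c * b + e *: (h * b) - e *: (b * h).
  move: Hgb; rewrite gE mulrDl mulrDr -scalerAl -scalerAr => ->.
  by rewrite addrK.
set k := d * (q - q^-1).
have Hz : u + k *: (g * b) = d *: X.
  rewrite Hu gE XE mulrDl -scalerAl K1.
  linsolve (c * b) (h * b) (b * h); rewrite /k /e /d; field; rewrite ?hq0 ?hq4' //.
have XA : X * a = a * X.
  move: Hal; rewrite mulrDl mulrDr -scalerAl -scalerAr => /addrI.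
  by apply: scalerI; rewrite invr_neq0.
have za : (d *: X) * a = a * (d *: X) by rewrite -scalerAl -scalerAr XA.
have Hu2 : u = d *: X - k *: (g * b) by rewrite -Hz addrK.
have Ua : u * a - a * u = k *: (g * m).
  rewrite Hu2 mulrBl mulrBr -!scalerAl -!scalerAr XA.
  rewrite [a * (g * b)]mulrA -Hga -!mulrA mE mulrBr.
  linsolve (a * X) (g * (b * a)) (g * (a * b)); field; rewrite ?hq0 ?hq4' //.
have Hgm : g * m = m * g.
  by rewrite mE mulrBr mulrBl commM // commM.
rewrite Ua -scalerAl -!scalerAr -scalerBr.
have -> : m * (a * (g * m)) = g * m * (a * m).
  by rewrite [a * (g * m)]mulrA -Hga -[g * a * m]mulrA mulrA -Hgm.
by rewrite subrr scaler0.
Qed.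

Unset Implicit Arguments.

Theorem theorem10p9 (F : fieldType) (q : F) (hq0 : q != 0) (hq4 : q ^+ 4 != 1) :
  phi_not_injective q.
Proof.
exists (Pq q); split.
  exists 'M[F]_4, (xm q), (ym q); split.
    exact: rel_ok hq0.
  exact: P_nonzero hq0.
move=> R a b c H; exact: delta_side hq0 hq4 H.
Qed.
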